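(* Let $\mathcal{K}\subset L^2(G)$ be a reproducing kernel Hilbert space, let $\Lambda$ be a relatively separated family in $G$, and let $(g_\lambda)_{\lambda\in\Lambda}$ be a system of $w$-molecules in $\mathcal{K}$ for some admissible weight $w$. Then $(g_\lambda)_{\lambda\in\Lambda}$ is a Bessel sequence in $\mathcal{K}$, i.e. there is $B>0$ with $\sum_{\lambda}|\langle f,g_\lambda\rangle|^2\le B\|f\|^2$ for all $f\in\mathcal{K}$.
   Context: $G$ is a $\sigma$-compact locally compact group with left Haar measure $\mu_G$; $Q$ a fixed symmetric open relatively compact neighborhood of $e$. $M_Qf(x)=\operatorname{ess\,sup}_{y\in xQ}|f(y)|$, $M_Q^Rf(x)=\operatorname{ess\,sup}_{y\in Qx}|f(y)|$. Admissible weight: measurable submultiplicative $w:G\to[1,\infty)$. $\mathcal{W}_w(G)=\{f\in C(G): w\cdot M_Q^RM_Qf\in L^1(G)\}$. RKHS: closed separable subspace of $L^2(G)$ with bounded point evaluations. A family $\Lambda$ is relatively separated if $\sup_x\#(\Lambda\cap xQ)<\infty$. A system of $w$-molecules is a family $(g_\lambda)_{\lambda\in\Lambda}$ in $\mathcal{K}$ with $|g_\lambda(x)|\le\min\{\Phi(\lambda^{-1}x),\Phi(x^{-1}\lambda)\}$ for all $x,\lambda$, for some non-negative $\Phi\in\mathcal{W}_w(G)$. *)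

(* Defs.v *)
From HB Require Import structures.
From mathcomp Require Import all_boot all_order all_algebra.
From mathcomp Require Import all_classical all_reals all_analysis.
From mathcomp Require Import measurable_realfun.
From mathcomp Require complex.
Import complex.ComplexField.
Set Implicit Arguments. Unset Strict Implicit. Unset Printing Implicit Defensive.
Import Order.TTheory GRing.Theory Num.Theory numFieldNormedType.Exports.
Local Open Scope classical_set_scope.
Local Open Scope ring_scope.

Notation Borel G := (g_sigma_algebraType (@open G)).

Notation Cx R := (complex.complex R).
Definition csq {R : realType} (z : Cx R) : R :=
  complex.Re z ^+ 2 + complex.Im z ^+ 2.
Definition cabs {R : realType} (z : Cx R) : R := Num.sqrt (csq z).

Section Defs.
Context {R : realType} {G : ptopologicalType}.
Variables (mul : G -> G -> G) (inv : G -> G) (e : G).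

Record is_sc_lc_group : Prop := {
  lcg_mulA : forall x y z, mul x (mul y z) = mul (mul x y) z;
  lcg_mul1 : forall x, mul e x = x;
  lcg_mul1r : forall x, mul x e = x;
  lcg_mulV : forall x, mul (inv x) x = e;
  lcg_mulVr : forall x, mul x (inv x) = e;
  lcg_cont_mul : continuous (fun p : G * G => mul p.1 p.2);
  lcg_cont_inv : continuous inv;
  lcg_hausdorff : hausdorff_space G;
  lcg_loc_compact : forall x : G, exists2 U : set G, nbhs x U & compact U;
  lcg_sigma_compact : exists K : nat -> set G,
      (forall n, compact (K n)) /\ \bigcup_n K n = setT }.

Variable mu : {measure set (Borel G) -> \bar R}.

Record is_left_haar : Prop := {
  haar_left_inv : forall (x : G) (A : set (Borel G)),
      measurable A -> mu (mul x @` A) = mu A;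
  haar_compact_finite : forall K : set G, compact K -> (mu K < +oo)%E;
  haar_open_pos : forall U : set G, open U -> U !=set0 -> (0 < mu U)%E;
  haar_outer_regular : forall A : set (Borel G), measurable A ->
      mu A = ereal_inf [set mu U | U in [set U : set G | open U /\ A `<=` U]];
  haar_inner_regular : forall U : set G, open U ->
      mu U = ereal_sup [set mu K | K in [set K : set G | compact K /\ K `<=` U]] }.

Definition is_window (Q : set G) : Prop :=
  [/\ open Q, Q e, inv @` Q = Q & compact (closure Q)].

Definition loc_esssup (A : set G) (F : G -> \bar R) : \bar R :=
  ereal_inf [set M : \bar R | mu (A `&` [set y | (M < F y)%E]) = 0%E].

Definition maxQ (Q : set G) (f : G -> R) : G -> \bar R :=
  fun x => loc_esssup (mul x @` Q) (fun y => (`|f y|)%:E).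
Definition maxQR (Q : set G) (F : G -> \bar R) : G -> \bar R :=
  fun x => loc_esssup ((fun q => mul q x) @` Q) F.

Definition admissible_weight (w : G -> R) : Prop :=
  [/\ measurable_fun (setT : set (Borel G)) w,
      forall x, 1 <= w x &
      forall x y, w (mul x y) <= w x * w y].

Definition in_Wiener (Q : set G) (w : G -> R) (f : G -> R) : Prop :=
  [/\ continuous f,
      measurable_fun (setT : set (Borel G))
        (fun x => ((w x)%:E * maxQR Q (maxQ Q f) x)%E) &
      (\int[mu]_x ((w x)%:E * maxQR Q (maxQ Q f) x) < +oo)%E].

Definition l2sq (f : G -> Cx R) : \bar R := (\int[mu]_x (csq (f x))%:E)%E.
Definition in_L2 (f : G -> Cx R) : Prop :=
  [/\ measurable_fun (setT : set (Borel G)) (fun x => complex.Re (f x)),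
      measurable_fun (setT : set (Borel G)) (fun x => complex.Im (f x)) &
      (l2sq f < +oo)%E].
(* <f, g> = \int f conj(g) *)
Definition ip (f g : G -> Cx R) : Cx R :=
  complex.Complex
    (Rintegral mu setT (fun x => complex.Re (f x) * complex.Re (g x)
                                 + complex.Im (f x) * complex.Im (g x)))
    (Rintegral mu setT (fun x => complex.Im (f x) * complex.Re (g x)
                                 - complex.Re (f x) * complex.Im (g x))).

Record is_RKHS (K : set (G -> Cx R)) : Prop := {
  rkhs_sub_L2 : K `<=` in_L2;
  rkhs_zero : K (fun _ => 0);
  rkhs_add : forall f g, K f -> K g -> K (fun x => f x + g x);
  rkhs_scale : forall (c : Cx R) f, K f -> K (fun x => c * f x);
  rkhs_closed : forall (u : nat -> G -> Cx R) (g : G -> Cx R),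
      (forall n, K (u n)) -> in_L2 g ->
      l2sq (fun x => u n x - g x) @[n --> \oo] --> 0%E ->
      exists2 f, K f & {ae mu, forall x, f x = g x};
  rkhs_separable : exists2 D : set (G -> Cx R), countable D /\ D `<=` K &
      forall f, K f -> forall eps : R, 0 < eps ->
        exists2 h, D h & (l2sq (fun x => (f x - h x)%R) < eps%:E)%E;
  rkhs_point_eval : forall x : G, exists C : R, forall f, K f ->
      cabs (f x) <= C * Num.sqrt (fine (l2sq f)) }.

Definition rel_separated {I : Type} (Q : set G) (Lam : I -> G) : Prop :=
  exists N : nat, forall x : G,
    ([set i | (mul x @` Q) (Lam i)] #<= [set: 'I_N])%card.

Definition w_molecules {I : Type} (K : set (G -> Cx R)) (Q : set G)
    (w : G -> R) (Lam : I -> G) (g : I -> G -> Cx R) : Prop :=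
  (forall i, K (g i)) /\
  exists Phi : G -> R, [/\ forall x, 0 <= Phi x, in_Wiener Q w Phi &
    forall i x, cabs (g i x) <= Num.min (Phi (mul (inv (Lam i)) x))
                                        (Phi (mul (inv x) (Lam i)))].

End Defs.

(* Main.v *)
Require Import Defs.
From HB Require Import structures.
From mathcomp Require Import all_boot all_order all_algebra.
From mathcomp Require Import all_classical all_reals all_analysis.
From mathcomp Require Import measurable_realfun.
From mathcomp Require Import ring lra.
From mathcomp Require complex.
Import complex.ComplexField.
Import Order.TTheory GRing.Theory Num.Theory numFieldNormedType.Exports.
Local Open Scope classical_set_scope.
Local Open Scope ring_scope.
Section Topo.
Context {R : realType} {G : ptopologicalType}.
Variables (mul : G -> G -> G) (inv : G -> G) (e : G).
Hypothesis HG : is_sc_lc_group mul inv e.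

Lemma contL a : continuous (mul a).
Proof.
move=> x.
have := @continuous_comp _ _ _ (fun z : G => (a, z)) (fun p : G * G => mul p.1 p.2) x.
apply; last exact: (lcg_cont_mul HG).
by apply: cvg_pair; [exact: cvg_cst|exact: cvg_id].
Qed.

Lemma contR a : continuous (mul^~ a).
Proof.
move=> x.
have := @continuous_comp _ _ _ (fun z : G => (z, a)) (fun p : G * G => mul p.1 p.2) x.
apply; last exact: (lcg_cont_mul HG).
by apply: cvg_pair; [exact: cvg_id|exact: cvg_cst].
Qed.

Lemma contIR a : continuous (fun z => mul (inv z) a).
Proof.
move=> x.
have := @continuous_comp _ _ _ inv (mul^~ a) x.
apply; [exact: (lcg_cont_inv HG)|exact: contR].
Qed.

Lemma imgL_eq x (A : set G) : mul x @` A = (mul (inv x)) @^-1` A.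
Proof.
apply/seteqP; split => [z [q Aq <-]|z Az] /=.
  by rewrite (lcg_mulA HG) (lcg_mulV HG) (lcg_mul1 HG).
exists (mul (inv x) z) => //.
by rewrite (lcg_mulA HG) (lcg_mulVr HG) (lcg_mul1 HG).
Qed.

Lemma imgR_eq x (A : set G) : (fun q => mul q x) @` A = (mul^~ (inv x)) @^-1` A.
Proof.
apply/seteqP; split => [z [q Aq <-]|z Az] /=.
  by rewrite -(lcg_mulA HG) (lcg_mulVr HG) (lcg_mul1r HG).
exists (mul z (inv x)) => //.
by rewrite -(lcg_mulA HG) (lcg_mulV HG) (lcg_mul1r HG).
Qed.

Lemma openL x (A : set G) : open A -> open (mul x @` A).
Proof. by move=> oA; rewrite imgL_eq; move/continuousP: (contL (inv x)); apply. Qed.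

Lemma openR x (A : set G) : open A -> open ((fun q => mul q x) @` A).
Proof. by move=> oA; rewrite imgR_eq; move/continuousP: (contR (inv x)); apply. Qed.

End Topo.
Section Meas.
Context {R : realType} {G : ptopologicalType}.

Lemma open_meas (A : set G) : open A -> measurable (A : set (Borel G)).
Proof. by move=> oA; apply: sub_sigma_algebra. Qed.

Lemma lsc_meas (h : G -> \bar R) : (forall r : R, open [set x | (r%:E < h x)%E]) ->
  measurable_fun (setT : set (Borel G)) h.
Proof.
move=> oh; apply: (measurability _ (ErealGenOInfty.measurableE R)).
move=> /= _ [_ [a ->]] <-; apply: measurableI => //; apply: open_meas.
by rewrite preimage_itvoy; exact: oh.
Qed.

Lemma cont_meas (f : G -> R) : continuous f -> measurable_fun (setT : set (Borel G)) f.
Proof.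
move=> /continuousP cf; apply: (measurability _ (RGenOInfty.measurableE R)).
move=> /= _ [_ [a ->]] <-; apply: measurableI => //; apply: open_meas.
apply: cf; exact: interval_open.
Qed.
End Meas.
Arguments contL {G mul inv e}.
Arguments contR {G mul inv e}.
Arguments contIR {G mul inv e}.
Arguments openL {G mul inv e}.
Arguments openR {G mul inv e}.
Arguments imgL_eq {G mul inv e}.
Arguments imgR_eq {G mul inv e}.
Section Schur.
Context {R : realType} {G : ptopologicalType}.
Variable mu : {measure set (Borel G) -> \bar R}.
Local Notation Rint h := (Rintegral mu setT h).
Local Notation re := complex.Re.
Local Notation im := complex.Im.
Local Notation integ h := (mu.-integrable (setT : set (Borel G)) (EFin \o h)).
Local Notation meas h := (measurable_fun (setT : set (Borel G)) h).

Lemma csq_ge0 (z : Cx R) : 0 <= csq z.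
Proof. by rewrite /csq addr_ge0 // sqr_ge0. Qed.

Lemma cabs_ge0 (z : Cx R) : 0 <= cabs z.
Proof. exact: sqrtr_ge0. Qed.

Lemma cabs_sq (z : Cx R) : cabs z ^+ 2 = csq z.
Proof. by rewrite /cabs sqr_sqrtr // csq_ge0. Qed.

Lemma cs2 (u v p q : R) : u * p + v * q <= Num.sqrt (u ^+ 2 + v ^+ 2) * Num.sqrt (p ^+ 2 + q ^+ 2).
Proof.
rewrite -sqrtrM ?addr_ge0 ?sqr_ge0 //.
apply: le_trans (ler_norm _) _.
rewrite -sqrtr_sqr ler_sqrt ?mulr_ge0 ?addr_ge0 ?sqr_ge0 //.
have h : 0 <= (u * q - v * p) ^+ 2 by exact: sqr_ge0.
by rewrite -subr_ge0; apply: le_trans h _; rewrite le_eqVlt; apply/orP; left; apply/eqP; ring.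
Qed.

Section L2.
Variable f : G -> Cx R.
Hypothesis hf : in_L2 mu f.

Lemma mre : meas (fun x => re (f x)). Proof. by case: hf. Qed.
Lemma mim : meas (fun x => im (f x)). Proof. by case: hf. Qed.
Lemma mcsq : meas (fun x => csq (f x)).
Proof. by apply: measurable_funD; apply: measurable_funX; [exact: mre|exact: mim]. Qed.
Lemma mcabs : meas (fun x => cabs (f x)).
Proof.
exact: (measurableT_comp (continuous_measurable_fun (@sqrt_continuous R)) mcsq).
Qed.
Lemma icsq : integ (fun x => csq (f x)).
Proof.
apply/integrableP; split; first by apply/measurable_EFinP; exact: mcsq.
have -> : (\int[mu]_(x in setT) `|(EFin \o (fun x => csq (f x))) x| = l2sq mu f)%E.
  by apply: eq_integral => x _; rewrite /comp abse_EFin ger0_norm // csq_ge0.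
by case: hf.
Qed.
Lemma l2sqE : l2sq mu f = (Rint (fun x => csq (f x)))%:E.
Proof.
rewrite /Rintegral fineK //; rewrite ge0_fin_numE; last first.
  by apply: integral_ge0 => x _; rewrite lee_fin csq_ge0.
by case: hf.
Qed.
End L2.

Lemma int_dom (h b : G -> R) : meas h -> integ b -> (forall x, `|h x| <= b x) -> integ h.
Proof.
move=> mh ib hb; apply: le_integrable ib => //; first exact/measurable_EFinP.
by move=> x _; rewrite /comp !abse_EFin lee_fin; apply: le_trans (hb x) (ler_norm _).
Qed.

Lemma int_comb (f g : G -> Cx R) (c1 c2 : R) : in_L2 mu f -> in_L2 mu g ->
  integ (fun x => c1 * csq (f x) + c2 * csq (g x)).
Proof.
move=> hf hg.
have := integrableD measurableT (integrableZl measurableT c1 (icsq _ hf)) (integrableZl measurableT c2 (icsq _ hg)).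
by apply: eq_integrable => // x _.
Qed.


Lemma bnd_p (a1 a2 b1 b2 : R) : `|a1 * b1 + a2 * b2| <= (a1 ^+ 2 + a2 ^+ 2) + (b1 ^+ 2 + b2 ^+ 2).
Proof.
have := sqr_ge0 (a1 - b1); have := sqr_ge0 (a2 - b2).
have := sqr_ge0 (a1 + b1); have := sqr_ge0 (a2 + b2).
have := sqr_ge0 (a2 - b1); have := sqr_ge0 (a1 - b2).
have := sqr_ge0 (a2 + b1); have := sqr_ge0 (a1 + b2).
rewrite ler_norml => *; apply/andP; split; nra.
Qed.

Lemma bnd_q (a1 a2 b1 b2 : R) : `|a2 * b1 - a1 * b2| <= (a1 ^+ 2 + a2 ^+ 2) + (b1 ^+ 2 + b2 ^+ 2).
Proof.
have := sqr_ge0 (a1 - b1); have := sqr_ge0 (a2 - b2).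
have := sqr_ge0 (a1 + b1); have := sqr_ge0 (a2 + b2).
have := sqr_ge0 (a2 - b1); have := sqr_ge0 (a1 - b2).
have := sqr_ge0 (a2 + b1); have := sqr_ge0 (a1 + b2).
rewrite ler_norml => *; apply/andP; split; nra.
Qed.

Lemma bnd_ab (z1 z2 : Cx R) : `|cabs z1 * cabs z2| <= csq z1 + csq z2.
Proof.
rewrite -(cabs_sq z1) -(cabs_sq z2) ger0_norm ?mulr_ge0 ?cabs_ge0 //.
have := cabs_ge0 z1; have := cabs_ge0 z2; nra.
Qed.

Lemma int_b (f g : G -> Cx R) (h : G -> R) : in_L2 mu f -> in_L2 mu g -> meas h ->
  (forall x, `|h x| <= csq (f x) + csq (g x)) -> integ h.
Proof.
move=> hf hg mh hb; apply: (int_dom _ _ mh (int_comb _ _ 1 1 hf hg)).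
by move=> x; rewrite !mul1r.
Qed.

Lemma int_bs (f g : G -> Cx R) (h : G -> R) (c : R) : in_L2 mu f -> in_L2 mu g -> meas h ->
  (forall x, `|h x| <= csq (f x) + csq (g x)) -> integ (fun x => c * h x).
Proof.
move=> hf hg mh hb.
apply: (int_dom _ _ _ (int_comb _ _ `|c| `|c| hf hg)).
  exact: measurable_funM (measurable_cst c) mh.
by move=> x; rewrite normrM -mulrDr ler_wpM2l.
Qed.

Lemma ip_bound (f g : G -> Cx R) : in_L2 mu f -> in_L2 mu g ->
  csq (ip mu f g) <= (Rint (fun x => cabs (f x) * cabs (g x))) ^+ 2.
Proof.
move=> hf hg.
set p := fun x => re (f x) * re (g x) + im (f x) * im (g x).
set q := fun x => im (f x) * re (g x) - re (f x) * im (g x).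
set ab := fun x => cabs (f x) * cabs (g x).
set u := Rint p. set v := Rint q. set X := Rint ab.
have -> : csq (ip mu f g) = u ^+ 2 + v ^+ 2 by [].
set s := Num.sqrt (u ^+ 2 + v ^+ 2).
have pq2 x : p x ^+ 2 + q x ^+ 2 = csq (f x) * csq (g x) by rewrite /p /q /csq; ring.
have ab_eq x : ab x = Num.sqrt (p x ^+ 2 + q x ^+ 2).
  by rewrite pq2 sqrtrM ?csq_ge0.
have mp : meas p.
  by apply: measurable_funD; apply: measurable_funM; apply: mre || apply: mim.
have mq : meas q.
  by apply: measurable_funB; apply: measurable_funM; apply: mre || apply: mim.
have mab : meas ab by apply: measurable_funM; exact: mcabs.
have bp x : `|p x| <= csq (f x) + csq (g x) by exact: bnd_p.
have bq x : `|q x| <= csq (f x) + csq (g x) by exact: bnd_q.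
have bab x : `|ab x| <= csq (f x) + csq (g x) by exact: bnd_ab.
have ip_ : integ p := int_b _ _ _ hf hg mp bp.
have iq_ : integ q := int_b _ _ _ hf hg mq bq.
have iab : integ ab := int_b _ _ _ hf hg mab bab.
have iup : integ (fun x => u * p x) := int_bs _ _ _ u hf hg mp bp.
have ivq : integ (fun x => v * q x) := int_bs _ _ _ v hf hg mq bq.
have isab : integ (fun x => s * ab x) := int_bs _ _ _ s hf hg mab bab.
have key : u ^+ 2 + v ^+ 2 <= s * X.
  have e1 : u ^+ 2 + v ^+ 2 = Rint (fun x => u * p x + v * q x).
    rewrite RintegralD // !RintegralZl //.
  rewrite e1 /X -RintegralZl //.
  apply: le_Rintegral => //; last first.
    by move=> x _; have := cs2 u v (p x) (q x); rewrite -ab_eq.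
    apply: (int_dom _ _ _ (int_comb _ _ (`|u| + `|v|) (`|u| + `|v|) hf hg)).
      by apply: measurable_funD; apply: measurable_funM => //; exact: measurable_cst.
    move=> x; apply: le_trans (ler_normD _ _) _; rewrite !normrM.
    apply: le_trans (lerD (ler_wpM2l (normr_ge0 u) (bp x)) (ler_wpM2l (normr_ge0 v) (bq x))) _.
    by rewrite le_eqVlt; apply/orP; left; apply/eqP; ring.
have s0 : 0 <= s by exact: sqrtr_ge0.
have ss : s ^+ 2 = u ^+ 2 + v ^+ 2 by rewrite sqr_sqrtr // addr_ge0 // sqr_ge0.
rewrite -ss; rewrite -ss in key; nra.
Qed.

Lemma integZ (h : G -> R) (c : R) : integ h -> integ (fun x => c * h x).
Proof. by move=> ih; have := integrableZl measurableT c ih; apply: eq_integrable. Qed.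

Lemma wcs (a k : G -> R) (C : R) : (forall x, 0 <= a x) -> (forall x, 0 <= k x) ->
  integ (fun x => a x * k x) -> integ (fun x => a x ^+ 2 * k x) -> integ k ->
  Rint k <= C -> 0 < C ->
  (Rint (fun x => a x * k x)) ^+ 2 <= C * Rint (fun x => a x ^+ 2 * k x).
Proof.
move=> a0 k0 iak ia2k ik kC C0.
set X := Rint _; set A := Rint (fun x => a x ^+ 2 * k x).
have X0 : 0 <= X by apply: Rintegral_ge0 => x _; rewrite mulr_ge0.
have A0 : 0 <= A by apply: Rintegral_ge0 => x _; rewrite mulr_ge0 ?sqr_ge0.
have ht t : 0 < t -> 2 * t * X <= t ^+ 2 * A + Rint k.
  move=> t0; rewrite /X /A -!RintegralZl // -RintegralD //; last exact: integZ.
  apply: le_Rintegral => //; first exact: integZ.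
    by have := integrableD measurableT (integZ _ (t ^+ 2) ia2k) ik; apply: eq_integrable => // x _.
  move=> x _; have := mulr_ge0 (k0 x) (sqr_ge0 (t * a x - 1)); nra.
have [->|Xn0] := eqVneq X 0; first by rewrite expr0n /= mulr_ge0 // ltW.
have Xp : 0 < X by rewrite lt_neqAle eq_sym Xn0.
have := ht (C / X) (divr_gt0 C0 Xp).
have -> : 2 * (C / X) * X = 2 * C by field; exact: Xn0.
move=> h1.
have h2 : C <= (C / X) ^+ 2 * A by lra.
have h3 : C * X ^+ 2 <= C * (C * A).
  have -> : C * (C * A) = (C / X) ^+ 2 * A * X ^+ 2 by field; exact: Xn0.
  by apply: ler_wpM2r => //; exact: sqr_ge0.
by rewrite -(ler_pM2l C0).
Qed.
End Schur.
Section Ess.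
Context {R : realType} {G : ptopologicalType}.
Variables (mul : G -> G -> G) (inv : G -> G) (e : G).
Variable mu : {measure set (Borel G) -> \bar R}.
Hypothesis HG : is_sc_lc_group mul inv e.
Hypothesis HH : is_left_haar mul mu.

Lemma ess_ge (A : set G) (F : G -> \bar R) y : A y ->
  (forall M, (M < F y)%E -> open (A `&` [set z | (M < F z)%E])) ->
  (F y <= loc_esssup mu A F)%E.
Proof.
move=> Ay hM; apply/ereal_infP => M /= h0.
rewrite leNgt; apply/negP => MF.
have := haar_open_pos HH (hM M MF).
rewrite h0 ltxx => /(_ (ex_intro _ y (conj Ay MF))) //.
Qed.

Lemma ess_le (A : set G) (F : G -> \bar R) M :
  (forall y, A y -> (F y <= M)%E) -> (loc_esssup mu A F <= M)%E.
Proof.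
move=> h; apply: ereal_inf_le; exists M => //=.
rewrite (_ : _ `&` _ = set0) ?measure0 //.
by apply/seteqP; split=> z // [Az] /=; rewrite ltNge h.
Qed.

Lemma meas_cont (f : G -> G) : continuous f -> measurable_fun (setT : set (Borel G)) (f : Borel G -> Borel G).
Proof.
move=> /continuousP cf; apply: (@measurability _ _ (Borel G) (Borel G) setT f (@open G) erefl).
move=> /= _ [B oB <-]; apply: measurableI => //; apply: open_meas.
exact: cf.
Qed.

Lemma int_transl (a : G) (h : G -> \bar R) : measurable_fun (setT : set (Borel G)) h ->
  (forall x, (0 <= h x)%E) ->
  (\int[mu]_x h (mul a x) = \int[mu]_x h x)%E.
Proof.
move=> mh h0.
have mphi : measurable_fun (setT : set (Borel G)) (mul a : Borel G -> Borel G).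
  exact: (@meas_cont _ (contL HG a)).
have := ge0_integral_pushforward mphi mu (D := setT) measurableT mh (fun y _ => h0 y).
rewrite preimage_setT => <-.
apply: eq_measure_integral => A mA _.
change (mu (mul a @^-1` A) = mu A).
have -> : mul a @^-1` A = mul (inv a) @` A.
  apply/seteqP; split => [z Az|_ [z Az <-]] /=.
    by exists (mul a z) => //; rewrite (lcg_mulA HG) (lcg_mulV HG) (lcg_mul1 HG).
  by rewrite (lcg_mulA HG) (lcg_mulVr HG) (lcg_mul1 HG).
by rewrite (haar_left_inv HH).
Qed.
Variables (Q : set G) (Phi : G -> R).
Hypothesis HQ : is_window inv e Q.
Hypothesis Phi0 : forall x, 0 <= Phi x.
Hypothesis Phic : continuous Phi.

Let oQ : open Q. Proof. by case: HQ. Qed.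
Let Qe : Q e. Proof. by case: HQ. Qed.

Local Notation H := (maxQ mul mu Q Phi).

Lemma P1 x q : Q q -> ((Phi (mul x q))%:E <= H x)%E.
Proof.
move=> Qq; rewrite -[X in (X%:E <= _)%E]ger0_norm //.
apply: ess_ge; first by exists q.
case=> [r| |] // _.
- apply: openI; first exact: (openL HG _ _ oQ).
  have -> : [set z | (r%:E < (`|Phi z|)%:E)%E] = Phi @^-1` [set t | r < t].
    by apply/seteqP; split => z /=; rewrite lte_fin ger0_norm.
  by move/continuousP: Phic; apply; exact: open_gt.
- rewrite (_ : [set z | _] = setT) ?setIT; first exact: (openL HG _ _ oQ).
  by apply/seteqP; split => z //= _; rewrite ltNye.
Qed.

Lemma H0 x : (0 <= H x)%E.
Proof. by apply: (le_trans _ (P1 x _ Qe)); rewrite lee_fin. Qed.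

Lemma P3 (r : R) : open [set x | (r%:E < H x)%E].
Proof.
rewrite openE => x /= rH.
have [q [Qq rq]] : exists q, Q q /\ (r%:E < (`|Phi (mul x q)|)%:E)%E.
  apply: contrapT => hn; move: rH; apply/negP; rewrite -leNgt.
  apply: ess_le => _ [q Qq <-]; rewrite leNgt; apply/negP => rq.
  by apply: hn; exists q.
set y := mul x q.
have oU : open [set x' | Q (mul (inv x') y)].
  by move/continuousP: (contIR HG y); apply.
have Ux : Q (mul (inv x) y) by rewrite /y (lcg_mulA HG) (lcg_mulV HG) (lcg_mul1 HG).
apply: filterS (open_nbhs_nbhs (conj oU Ux)) => x' /= Qx'.
apply: (lt_le_trans rq); rewrite ger0_norm //.
have := P1 x' _ Qx'; by rewrite (lcg_mulA HG) (lcg_mulVr HG) (lcg_mul1 HG).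
Qed.

Lemma P2 x : (H x <= maxQR mul mu Q H x)%E.
Proof.
apply: ess_ge; first by exists e => //; rewrite (lcg_mul1 HG).
case=> [r| |] //; [move=> _| by rewrite ltNge leey| move=> _].
- by apply: openI; [exact: (openR HG _ _ oQ)|exact: P3].
- rewrite (_ : [set z | _] = setT) ?setIT; first exact: (openR HG _ _ oQ).
  apply/seteqP; split => z //= _; apply: (lt_le_trans _ (H0 z)); exact: ltNyr.
Qed.

Variables (I : choiceType) (Lam : I -> G) (N : nat).
Hypothesis HN : forall x, ([set i | (mul x @` Q) (Lam i)] #<= [set: 'I_N])%card.

Let Qsym q : Q q -> Q (inv q).
Proof. by case: HQ => _ _ sQ _ Qq; rewrite -sQ; exists q. Qed.

Lemma count_bound z : exists2 S : set I, finite_set S /\ (S #<= `I_N)%card &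
  (forall i, (mul (Lam i) @` Q) z -> S i).
Proof.
exists [set i | (mul z @` Q) (Lam i)].
  have h : ([set i | (mul z @` Q) (Lam i)] #<= `I_N)%card.
    by apply: card_le_trans (HN z) _; case/card_eqPle: (@card_II N).
  split; first by apply/finite_set_leP; exists N.
  exact: h.
move=> i [q Qq <-] /=; exists (inv q); first exact: Qsym.
by rewrite -(lcg_mulA HG) (lcg_mulVr HG) (lcg_mul1r HG).
Qed.

Lemma sum_cst_seq (T : Type) (s : seq T) (c : \bar R) : (\sum_(i <- s) c)%E = (c *+ size s)%E.
Proof. elim: s => [|a s ih]; first by rewrite big_nil. rewrite big_cons ih /=; case: (size s) => [|n] //=. by rewrite adde0. Qed.

Lemma sum_patch_le z (F : set I) (hx : G -> \bar R) : finite_set F -> (forall y, (0 <= hx y)%E) ->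
  (\sum_(i \in F) (hx \_ (mul (Lam i) @` Q)) z <= N%:R%:E * hx z)%E.
Proof.
move=> fF h0; have [S [fS cS] hS] := count_bound z.
apply: (@le_trans _ _ (\sum_(i \in F) (if i \in S then hx z else 0))%E).
  apply: lee_fsum => // i _; rewrite /patch; case: ifPn => [/set_mem/hS Si|_].
    by rewrite mem_set.
  by case: ifPn.
rewrite -fsbig_mkcondr.
apply: (@le_trans _ _ (\sum_(i \in S) hx z)%E).
  apply: lee_fsum_nneg_subset => //; first exact: finite_setIl.
  by move=> i; rewrite !inE => -[].
rewrite fsbig_finite // sum_cst_seq -mule_natl.
apply: lee_wpmul2r => //; rewrite lee_fin ler_nat.
exact: (geq_card_fset_set cS).
Qed.

Lemma mH : measurable_fun (setT : set (Borel G)) H.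
Proof. exact: lsc_meas P3. Qed.

Lemma mHx a : measurable_fun (setT : set (Borel G)) (fun z => H (mul a z)).
Proof.
apply: lsc_meas => r.
by move/continuousP: (contL HG a) => /(_ _ (P3 r)).
Qed.

Lemma sumPhi x (F : set I) : finite_set F ->
  (mu Q * \sum_(i \in F) (Phi (mul (inv x) (Lam i)))%:E <= N%:R%:E * \int[mu]_z H z)%E.
Proof.
move=> fF.
set hx := fun z => H (mul (inv x) z).
have mhx : measurable_fun (setT : set (Borel G)) hx := mHx (inv x).
have hx0 y : (0 <= hx y)%E by exact: H0.
have mQ : measurable (Q : set (Borel G)) := open_meas _ oQ.
have mA i : measurable (mul (Lam i) @` Q : set (Borel G)) := open_meas _ (openL HG _ _ oQ).
have mP i : measurable_fun (setT : set (Borel G)) (hx \_ (mul (Lam i) @` Q)).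
  by apply/(measurable_restrictT _ (mA i)); exact: measurable_funS mhx.
have P0 i y : (0 <= (hx \_ (mul (Lam i) @` Q)) y)%E.
  by rewrite /patch; case: ifPn.
rewrite ge0_mule_fsumr; last by move=> i; rewrite lee_fin.
apply: (@le_trans _ _ (\sum_(i \in F) \int[mu]_z (hx \_ (mul (Lam i) @` Q)) z)%E).
  apply: lee_fsum => // i _.
  rewrite -integral_mkcond.
  rewrite -(haar_left_inv HH (Lam i) mQ) muleC -integral_cst //.
  apply: ge0_le_integral => //.
  - by move=> y _; rewrite lee_fin.
  - exact: measurable_funS mhx.
  - move=> _ [q Qq <-]; rewrite /hx /cst.
    have := P1 (mul (inv x) (mul (Lam i) q)) _ (Qsym _ Qq).
    by rewrite -!(lcg_mulA HG) (lcg_mulVr HG) (lcg_mul1r HG).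
rewrite -ge0_integral_fsum //.
apply: (@le_trans _ _ (\int[mu]_z (N%:R%:E * hx z))%E).
  apply: ge0_le_integral => //.
  - by move=> y _; apply: fsume_ge0.
  - exact: emeasurable_fsum.
  - exact: measurable_funeM.
  - by move=> y _; exact: sum_patch_le.
rewrite ge0_integralZl //.
by rewrite /hx (int_transl (inv x) _ mH H0).
Qed.

Variable w : G -> R.
Hypothesis Hw : admissible_weight mul w.
Hypothesis HW : in_Wiener mul mu Q w Phi.

Lemma intH_fin : (\int[mu]_z H z < +oo)%E.
Proof.
case: HW => _ mW fW; apply: le_lt_trans fW.
apply: ge0_le_integral => //.
- by move=> x _; exact: H0.
- exact: mH.
- move=> x _; apply: le_trans (P2 x) _; apply: lee_pemull.
    exact: le_trans (H0 x) (P2 x).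
  by case: Hw => _ w1 _; rewrite lee_fin; exact: w1.
Qed.

Lemma intH_ge0 : (0 <= \int[mu]_z H z)%E.
Proof. by apply: integral_ge0 => x _; exact: H0. Qed.

Lemma muQ_pos : (0 < mu Q)%E.
Proof. by apply: (haar_open_pos HH oQ); exists e. Qed.

Lemma muQ_fin : (mu Q < +oo)%E.
Proof.
have mQ : measurable (Q : set (Borel G)) := open_meas _ oQ.
have mcl : measurable (closure Q : set (Borel G)).
  rewrite -[closure Q]setCK; apply: measurableC; apply: open_meas.
  by rewrite openC; exact: closed_closure.
apply: le_lt_trans (haar_compact_finite HH (_ : compact (closure Q))); last by case: HQ.
by apply: le_measure; rewrite ?inE //; exact: subset_closure.
Qed.

Lemma sumPhi_real x (F : set I) : finite_set F ->
  \sum_(i \in F) Phi (mul (inv x) (Lam i)) <=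
    N%:R * fine (\int[mu]_z H z)%E / fine (mu Q).
Proof.
move=> fF; have := sumPhi x _ fF.
have finQ : mu Q \is a fin_num by rewrite ge0_fin_numE ?muQ_fin // ltW // muQ_pos.
have finH : (\int[mu]_z H z)%E \is a fin_num by rewrite ge0_fin_numE ?intH_fin // intH_ge0.
have mq0 : 0 < fine (mu Q) by apply: fine_gt0; rewrite muQ_pos muQ_fin.
rewrite fsumEFin // -(fineK finQ) -(fineK finH) -!EFinM lee_fin => h.
by rewrite ler_pdivlMr // mulrC.
Qed.

Lemma intPhi_transl a : (\int[mu]_x (Phi (mul a x))%:E <= \int[mu]_z H z)%E.
Proof.
have mP : measurable_fun (setT : set (Borel G)) (fun x => (Phi x)%:E).
  by apply/measurable_EFinP; exact: cont_meas.
rewrite (int_transl a (fun x => (Phi x)%:E) mP); last by move=> y; rewrite lee_fin.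
apply: ge0_le_integral => //.
- by move=> y _; rewrite lee_fin.
- exact: mH.
- by move=> y _; have := P1 y _ Qe; rewrite (lcg_mul1r HG).
Qed.

Local Notation integ h := (mu.-integrable (setT : set (Borel G)) (EFin \o h)).
Local Notation Rint h := (Rintegral mu setT h).

Lemma final (K : set (G -> Cx R)) (g : I -> G -> Cx R) :
  is_RKHS mu K -> (forall i, K (g i)) ->
  (forall i x, cabs (g i x) <= Num.min (Phi (mul (inv (Lam i)) x)) (Phi (mul (inv x) (Lam i)))) ->
  exists2 B : R, 0 < B & forall f, K f ->
    (\esum_(i in [set: I]) (csq (ip mu f (g i)))%:E <= B%:E * l2sq mu f)%E.
Proof.
move=> HK gK Hg.
set cH := fine (\int[mu]_z H z)%E.
have finH : (\int[mu]_z H z)%E \is a fin_num by rewrite ge0_fin_numE ?intH_fin // intH_ge0.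
have cH0 : 0 <= cH by apply: fine_ge0; exact: intH_ge0.
have mq0 : 0 < fine (mu Q) by apply: fine_gt0; rewrite muQ_pos muQ_fin.
set C1 := N%:R * cH / fine (mu Q) + 1.
set C2 := cH + 1.
have C10 : 0 < C1 by rewrite /C1 ltr_wpDl // divr_ge0 ?mulr_ge0 // ltW.
have C20 : 0 < C2 by rewrite /C2 ltr_wpDl.
exists (C2 * C1); first by rewrite mulr_gt0.
move=> f Kf.
have hf := rkhs_sub_L2 HK Kf.
have hg i : in_L2 mu (g i) := rkhs_sub_L2 HK (gK i).
set k := fun i x => cabs (g i x).
have kP i x : k i x <= Phi (mul (inv x) (Lam i)) by have := Hg i x; rewrite le_min => /andP[].
have kL i x : k i x <= Phi (mul (inv (Lam i)) x) by have := Hg i x; rewrite le_min => /andP[].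
have sk x F : finite_set F -> \sum_(i \in F) k i x <= C1.
  move=> fF; rewrite -lee_fin -fsumEFin //.
  apply: (@le_trans _ _ (\sum_(i \in F) Phi (mul (inv x) (Lam i)))%:E).
    by rewrite -fsumEFin //; apply: lee_fsum => // i _; rewrite lee_fin; exact: kP.
  rewrite lee_fin; apply: le_trans (sumPhi_real x _ fF) _; rewrite lerDl //.
have kC i x : k i x <= C1.
  by have := sk x [set i] (finite_set1 i); rewrite fsbig_set1.
have mk i : measurable_fun (setT : set (Borel G)) (k i) := mcabs mu (g i) (hg i).
have k0 i x : 0 <= k i x := cabs_ge0 _.
have mPt a : measurable_fun (setT : set (Borel G)) (fun x => Phi (mul a x)).
  by apply: cont_meas => x; exact: (continuous_comp (contL HG a x) (Phic _)).
have iPt a : integ (fun x => Phi (mul a x)).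
  apply/integrableP; split; first by apply/measurable_EFinP.
  have -> : (\int[mu]_(x in setT) `|(EFin \o (fun x => Phi (mul a x))) x| =
      \int[mu]_x (Phi (mul a x))%:E)%E.
    by apply: eq_integral => x _; rewrite /comp abse_EFin ger0_norm.
  exact: le_lt_trans (intPhi_transl a) intH_fin.
have ik i : integ (k i).
  apply: (int_dom mu (k i) _ (mk i) (iPt (inv (Lam i)))) => x.
  by rewrite ger0_norm //; exact: kL.
have Rk i : Rint (k i) <= C2.
  apply: le_trans (le_Rintegral measurableT (ik i) (iPt (inv (Lam i))) (fun x _ => kL i x)) _.
  apply: (@le_trans _ _ cH); last by rewrite /C2 lerDl.
  apply: fine_le => //; last exact: intPhi_transl.
  exact: (integrable_fin_num measurableT (iPt (inv (Lam i)))).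
have ia2k' i : integ (fun x => csq (f x) * k i x).
  apply: (int_dom mu _ _ _ (int_comb mu f f C1 0 hf hf)).
    by apply: measurable_funM; [exact: (mcsq mu f hf)|exact: mk].
  move=> x; rewrite mul0r addr0 ger0_norm ?mulr_ge0 ?csq_ge0 // mulrC.
  by apply: ler_wpM2r; [exact: csq_ge0|exact: kC].
have bound_i i : csq (ip mu f (g i)) <= C2 * Rint (fun x => csq (f x) * k i x).
  apply: le_trans (ip_bound mu f (g i) hf (hg i)) _.
  have fe : (fun x => cabs (f x) ^+ 2 * k i x) = (fun x => csq (f x) * k i x).
    by apply/funext => x; rewrite cabs_sq.
  have iak : integ (fun x => cabs (f x) * k i x).
    apply: (int_b mu f (g i) _ hf (hg i)); last by move=> x; exact: bnd_ab.
    by apply: measurable_funM; [exact: (mcabs mu f hf)|exact: mk].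
  have ia2k : integ (fun x => cabs (f x) ^+ 2 * k i x) by rewrite fe; exact: ia2k'.
  have := wcs mu (fun x => cabs (f x)) (k i) C2 (fun x => cabs_ge0 _) (k0 i) iak ia2k (ik i) (Rk i) C20.
  by rewrite fe.
apply: ge_ereal_sup => _ [F [fF _] <-].
apply: (@le_trans _ _ (\sum_(i \in F) (C2%:E * (Rint (fun x => csq (f x) * k i x))%:E))%E).
  by apply: lee_fsum => // i _; rewrite -EFinM lee_fin; exact: bound_i.
rewrite -ge0_mule_fsumr; last first.
  by move=> i; rewrite lee_fin; apply: Rintegral_ge0 => x _; rewrite mulr_ge0 ?csq_ge0.
rewrite EFinM -muleA; apply: lee_wpmul2l; first by rewrite lee_fin ltW.
have -> : (\sum_(i \in F) (Rint (fun x => csq (f x) * k i x))%:E =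
    \sum_(i \in F) \int[mu]_x (csq (f x) * k i x)%:E)%E.
  apply: eq_fsbigr => i _; rewrite /Rintegral fineK //.
  exact: (integrable_fin_num measurableT (ia2k' i)).
have mf i : measurable_fun (setT : set (Borel G)) (fun x => (csq (f x) * k i x)%:E).
  by apply/measurable_EFinP; apply: measurable_funM; [exact: (mcsq mu f hf)|exact: mk].
have f0 i x : [set: Borel G] x -> (0 <= (csq (f x) * k i x)%:E)%E.
  by move=> _; rewrite lee_fin mulr_ge0 ?csq_ge0.
rewrite -(ge0_integral_fsum mu measurableT mf f0 fF).
have mcf : measurable_fun (setT : set (Borel G)) (fun x => (csq (f x))%:E).
  by apply/measurable_EFinP; exact: (mcsq mu f hf).
rewrite /l2sq -ge0_integralZl //; last 2 first.
  by move=> x _; rewrite lee_fin csq_ge0.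
  by rewrite lee_fin ltW.
apply: ge0_le_integral => //.
- by move=> x _; apply: fsume_ge0 => i _; exact: f0.
- exact: emeasurable_fsum.
- exact: measurable_funeM.
- move=> x _; rewrite fsumEFin // -mulr_fsumr -EFinM lee_fin mulrC.
  by apply: ler_wpM2r; [exact: csq_ge0|exact: sk].
Qed.
End Ess.

Theorem lemma4p8 (R : realType) (G : ptopologicalType)
  (mul : G -> G -> G) (inv : G -> G) (e : G)
  (mu : {measure set (Borel G) -> \bar R}) (Q : set G)
  (K : set (G -> Cx R)) (I : choiceType) (Lam : I -> G)
  (w : G -> R) (g : I -> G -> Cx R) :
  is_sc_lc_group mul inv e ->
  is_left_haar mul mu ->
  is_window inv e Q ->
  is_RKHS mu K ->
  rel_separated mul Q Lam ->
  admissible_weight mul w ->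
  w_molecules mul inv mu K Q w Lam g ->
  exists2 B : R, 0 < B &
    forall f, K f ->
      (\esum_(i in [set: I]) (csq (ip mu f (g i)))%:E <= B%:E * l2sq mu f)%E.
Proof.
move=> HG HH HQ HK [N HN] Hw [gK [Phi [Phi0 HW Hg]]].
have Phic : continuous Phi by case: HW.
exact: (@final R G mul inv e mu HG HH Q Phi HQ Phi0 Phic I Lam N HN w Hw HW K g HK gK Hg).
Qed.
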